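(* Let $\mathcal P$ be a typical heptagonal $7$-configuration. Then there is at most one point $p\in\mathcal P$ with dominance index $d(p)=6$, and at most one point $p\in\mathcal P$ with $d(p)=0$.
   Context: A $7$-configuration is a set of $7$ distinct points in $\mathbb{RP}^2$; it is typical if no three of its points are collinear and no six of them lie on a common conic. It is heptagonal if there is a line $\ell$ disjoint from it such that its points are the vertices of a convex heptagon in the affine plane $\mathbb{RP}^2\smallsetminus\ell$. For distinct $p,q\in\mathcal P$, let $Q_{p,q}$ be the conic through the five points of $\mathcal P\smallsetminus\{p,q\}$; ''inside'' a nonsingular conic means the component of its complement homeomorphic to a disc, ''outside'' the other one. The dominance index $d(p)$ of $p$ is the number of $q\in\mathcal P\smallsetminus\{p\}$ such that $p$ lies outside $Q_{p,q}$. *)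

(* Defs.v *)
From HB Require Import structures.
From mathcomp Require Import all_boot all_order all_algebra.
From mathcomp Require Import boolp reals.
Set Implicit Arguments. Unset Strict Implicit. Unset Printing Implicit Defensive.
Import Order.TTheory GRing.Theory Num.Theory.
Local Open Scope ring_scope.

(* Points of RP^2 are represented by nonzero row vectors of R^3
   (homogeneous coordinates); a 7-configuration is indexed by 'I_7. *)
Section Defs.
Variable R : realType.
Notation vec := 'rV[R]_3.

Definition qf (M : 'M[R]_3) (x : vec) : R := (x *m M *m x^T) 0 0.

(* a conic = zero locus of a nonzero quadratic form (symmetric matrix) *)
Definition is_conic (M : 'M[R]_3) : Prop := M^T = M /\ M <> 0.

Definition mx3 (u v w : vec) : 'M[R]_3 := col_mx u (col_mx v w).

Definition collinear3 (u v w : vec) : Prop := \det (mx3 u v w) = 0.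

Definition same_point (u v : vec) : Prop := exists c : R, u = c *: v.

Definition config7 (P : 'I_7 -> vec) : Prop :=
  (forall i, P i <> 0) /\
  (forall i j, i <> j -> ~ same_point (P i) (P j)).

Definition typical (P : 'I_7 -> vec) : Prop :=
  config7 P /\
  (forall i j k, i <> j -> j <> k -> i <> k -> ~ collinear3 (P i) (P j) (P k)) /\
  (forall i (M : 'M[R]_3), is_conic M -> ~ (forall k, k <> i -> qf M (P k) = 0)).

(* affine chart R P^2 \ {a.x = 0}, realised as the affine plane {y | a.y = 1}
   of R^3 : the point x (with a.x <> 0) is sent to (a.x)^-1 x. *)
Definition lin (a x : vec) : R := (x *m a^T) 0 0.
Definition chart (a x : vec) : vec := (lin a x)^-1 *: x.

Definition convex_position (Q : 'I_7 -> vec) : Prop :=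
  forall i, ~ exists w : 'I_7 -> R,
      (forall j, 0 <= w j) /\ w i = 0 /\ \sum_j w j = 1 /\
      \sum_j w j *: Q j = Q i.

(* heptagonal: some line l = {a.x = 0} misses P, and in the affine plane
   RP^2 \ l the seven points are the vertices of a convex heptagon *)
Definition heptagonal (P : 'I_7 -> vec) : Prop :=
  exists a : vec, (forall i, lin a (P i) <> 0) /\
    convex_position (fun i => chart a (P i)).

(* A nonsingular real
   conic with a real point has signature (2,1) or (1,2); its disc component
   (inside) is where the form has the sign of the eigenvalue of multiplicity
   one, i.e. the sign of det M (e.g. x^2+y^2-z^2: inside = {x^2+y^2<z^2}). *)
Definition inside_conic (M : 'M[R]_3) (x : vec) : Prop :=
  \det M <> 0 /\ 0 < qf M x * \det M.
Definition outside_conic (M : 'M[R]_3) (x : vec) : Prop :=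
  \det M <> 0 /\ qf M x * \det M < 0.

(* p lies outside Q_{p,q}, the conic through the five points of P \ {p,q}
   (unique up to scaling for a typical configuration) *)
Definition outside_Q (P : 'I_7 -> vec) (p q : 'I_7) : Prop :=
  exists M : 'M[R]_3, is_conic M /\
    (forall k, k <> p -> k <> q -> qf M (P k) = 0) /\
    outside_conic M (P p).

Definition dominance (P : 'I_7 -> vec) (p : 'I_7) : nat :=
  #|[set q : 'I_7 | (q != p) && `[< outside_Q P p q >] ]|.

End Defs.

(* Main.v *)
From HB Require Import structures.
From mathcomp Require Import all_boot all_order all_algebra.
From mathcomp Require Import boolp reals ring lra.
Require Import Defs.
Import Order.TTheory GRing.Theory Num.Theory.
Local Open Scope ring_scope.
Set Implicit Arguments. Unset Strict Implicit. Unset Printing Implicit Defensive.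

Lemma lagr (R : comNzRingType) (v0 v1 v2 a0 a1 a2 b0 b1 b2 : R) :
  v0*a0 + v1*a1 + v2*a2 = 0 -> v0*b0 + v1*b1 + v2*b2 = 0 ->
  let n0 := a1*b2 - a2*b1 in let n1 := a2*b0 - a0*b2 in let n2 := a0*b1 - a1*b0 in
  let N := n0*n0 + n1*n1 + n2*n2 in let mu := v0*n0 + v1*n1 + v2*n2 in
  [/\ N * v0 = mu * n0, N * v1 = mu * n1 & N * v2 = mu * n2].
Proof.
move=> ha hb n0 n1 n2 N mu.
set va := v0*a0 + v1*a1 + v2*a2 in ha; set vb := v0*b0 + v1*b1 + v2*b2 in hb.
set aa := a0*a0+a1*a1+a2*a2; set bb := b0*b0+b1*b1+b2*b2; set ab := a0*b0+a1*b1+a2*b2.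
have E0 : N * v0 - mu * n0 = (va * bb - vb * ab) * a0 + (vb * aa - va * ab) * b0.
  by rewrite /N /mu /n0 /n1 /n2 /va /vb /aa /bb /ab; ring.
have E1 : N * v1 - mu * n1 = (va * bb - vb * ab) * a1 + (vb * aa - va * ab) * b1.
  by rewrite /N /mu /n0 /n1 /n2 /va /vb /aa /bb /ab; ring.
have E2 : N * v2 - mu * n2 = (va * bb - vb * ab) * a2 + (vb * aa - va * ab) * b2.
  by rewrite /N /mu /n0 /n1 /n2 /va /vb /aa /bb /ab; ring.
rewrite ha hb in E0 E1 E2.
by split; apply/subr0_eq; [rewrite E0|rewrite E1|rewrite E2]; ring.
Qed.

Arguments lagr {R v0 v1 v2 a0 a1 a2 b0 b1 b2}.

Lemma PLs (R : realFieldType) (D0 cm0 cm1 cm2 cx0 cx1 cx2 cy0 cy1 cy2 a1 b1 g1 a2 b2 g2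
   q1 e1 q2 e2 djmy dkmy dlmy djmx dkmx dlmx sj sk sl sm : R) :
  let rm0 := cm0*cm1 in let rm1 := cm0*cm2 in let rm2 := cm1*cm2 in
  let rx0 := cx0*cx1 in let rx1 := cx0*cx2 in let rx2 := cx1*cx2 in
  let ry0 := cy0*cy1 in let ry1 := cy0*cy2 in let ry2 := cy1*cy2 in
  D0 != 0 -> cm2 != 0 -> cx2 != 0 -> cy2 != 0 -> dlmy != 0 -> dlmx != 0 ->
  D0^+2 * q1 = 2*(a1*rx0 + b1*rx1 + g1*rx2) ->
  D0^+2 * e1 = 2*(a1*b1*g1) ->
  a1*rm0 + b1*rm1 + g1*rm2 = 0 -> a1*ry0 + b1*ry1 + g1*ry2 = 0 ->
  D0^+2 * q2 = 2*(a2*ry0 + b2*ry1 + g2*ry2) ->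
  D0^+2 * e2 = 2*(a2*b2*g2) ->
  a2*rm0 + b2*rm1 + g2*rm2 = 0 -> a2*rx0 + b2*rx1 + g2*rx2 = 0 ->
  cm0*cy1 - cm1*cy0 = D0*dlmy -> cm2*cy0 - cm0*cy2 = D0*dkmy -> cm1*cy2 - cm2*cy1 = D0*djmy ->
  cm0*cx1 - cm1*cx0 = D0*dlmx -> cm2*cx0 - cm0*cx2 = D0*dkmx -> cm1*cx2 - cm2*cx1 = D0*djmx ->
  0 < cx0*cy0*sk*sl -> 0 < cx1*cy1*sj*sl -> 0 < cx2*cy2*sj*sk ->
  0 < djmx*djmy*sj*sm -> 0 < dkmx*dkmy*sk*sm -> 0 < dlmx*dlmy*sl*sm ->
  q1*e1*(q2*e2)*(sj*sk*sl*sm) <= 0.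
Proof.
move=> rm0 rm1 rm2 rx0 rx1 rx2 ry0 ry1 ry2 hD hcm hcx hcy hly hlx hq1 he1 hm1 hy1 hq2 he2 hm2 hx2
  Fly Fky Fjy Flx Fkx Fjx c1 c2 c3 c4 c5 c6.
have [La Lb Lg] := lagr hm1 hy1.
have [La' Lb' Lg'] := lagr hm2 hx2.
move: La Lb Lg La' Lb' Lg'.
set n10 := rm1*ry2 - rm2*ry1; set n11 := rm2*ry0 - rm0*ry2; set n12 := rm0*ry1 - rm1*ry0.
set n20 := rm1*rx2 - rm2*rx1; set n21 := rm2*rx0 - rm0*rx2; set n22 := rm0*rx1 - rm1*rx0.
set N1 := n10*n10 + _ + _; set N2 := n20*n20 + _ + _.
set mu1 := a1*n10 + _ + _; set mu2 := a2*n20 + _ + _.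
move=> La Lb Lg La' Lb' Lg'.
have E10 : n10 = cm2*cy2*(D0*dlmy) by rewrite -Fly /n10 /rm1 /rm2 /ry1 /ry2; ring.
have E11 : n11 = cm1*cy1*(D0*dkmy) by rewrite -Fky /n11 /rm2 /rm0 /ry0 /ry2; ring.
have E12 : n12 = cm0*cy0*(D0*djmy) by rewrite -Fjy /n12 /rm0 /rm1 /ry0 /ry1; ring.
have E20 : n20 = cm2*cx2*(D0*dlmx) by rewrite -Flx /n20 /rm1 /rm2 /rx1 /rx2; ring.
have E21 : n21 = cm1*cx1*(D0*dkmx) by rewrite -Fkx /n21 /rm2 /rm0 /rx0 /rx2; ring.
have E22 : n22 = cm0*cx0*(D0*djmx) by rewrite -Fjx /n22 /rm0 /rm1 /rx0 /rx1; ring.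
have n10nz : n10 != 0 by rewrite E10 !mulf_neq0.
have n20nz : n20 != 0 by rewrite E20 !mulf_neq0.
have N1pos : 0 < N1.
  have : 0 < n10 ^+ 2 by rewrite exprn_even_gt0.
  have := sqr_ge0 n11; have := sqr_ge0 n12; rewrite /N1 !expr2; lra.
have N2pos : 0 < N2.
  have : 0 < n20 ^+ 2 by rewrite exprn_even_gt0.
  have := sqr_ge0 n21; have := sqr_ge0 n22; rewrite /N2 !expr2; lra.
have K1 : N1^+4 * (D0^+4*(q1*e1)) = 4 * (mu1 * (n10*rx0 + n11*rx1 + n12*rx2)) * (mu1^+3 * (n10*n11*n12)).
  have -> : D0^+4*(q1*e1) = (D0^+2*q1)*(D0^+2*e1) by ring.
  rewrite hq1 he1.
  have -> : N1 ^+ 4 * (2 * (a1 * rx0 + b1 * rx1 + g1 * rx2) * (2 * (a1 * b1 * g1))) =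
    4 * ((N1*a1)*rx0 + (N1*b1)*rx1 + (N1*g1)*rx2) * ((N1*a1)*(N1*b1)*(N1*g1)) by ring.
  rewrite La Lb Lg; ring.
have K2 : N2^+4 * (D0^+4*(q2*e2)) = 4 * (mu2 * (n20*ry0 + n21*ry1 + n22*ry2)) * (mu2^+3 * (n20*n21*n22)).
  have -> : D0^+4*(q2*e2) = (D0^+2*q2)*(D0^+2*e2) by ring.
  rewrite hq2 he2.
  have -> : N2 ^+ 4 * (2 * (a2 * ry0 + b2 * ry1 + g2 * ry2) * (2 * (a2 * b2 * g2))) =
    4 * ((N2*a2)*ry0 + (N2*b2)*ry1 + (N2*g2)*ry2) * ((N2*a2)*(N2*b2)*(N2*g2)) by ring.
  rewrite La' Lb' Lg'; ring.
set K := n10*rx0 + n11*rx1 + n12*rx2 in K1.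
have KK : n20*ry0 + n21*ry1 + n22*ry2 = - K.
  by rewrite /K /n10 /n11 /n12 /n20 /n21 /n22; ring.
rewrite KK in K2.
set s := sj*sk*sl*sm.
have Tpos : 0 <= n10*n11*n12*(n20*n21*n22) * s^+3.
  have -> : n10*n11*n12*(n20*n21*n22) * s^+3 = (cm0*cm1*cm2)^+2 * D0^+6 *
     ((cx0*cy0*sk*sl)*(cx1*cy1*sj*sl)*(cx2*cy2*sj*sk)*(djmx*djmy*sj*sm)*(dkmx*dkmy*sk*sm)*(dlmx*dlmy*sl*sm)).
    by rewrite E10 E11 E12 E20 E21 E22 /s; ring.
  apply: mulr_ge0; first by apply: mulr_ge0; rewrite ?exprn_even_ge0 // sqr_ge0.
  by apply: ltW; do 5! (apply: mulr_gt0 => //).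
have snz : s != 0.
  have : 0 < (cx0*cy0*sk*sl)*(djmx*djmy*sj*sm) by rewrite mulr_gt0.
  have -> : (cx0*cy0*sk*sl)*(djmx*djmy*sj*sm) = cx0*cy0*djmx*djmy*s by rewrite /s; ring.
  by apply: contraTneq => ->; rewrite mulr0 ltxx.
have W : (N1^+4 * N2^+4 * D0^+8 * s^+2) * (q1*e1*(q2*e2)*s) =
  - 16 * (mu1^+4 * mu2^+4 * K^+2) * (n10*n11*n12*(n20*n21*n22) * s^+3).
  have -> : N1^+4 * N2^+4 * D0^+8 * s^+2 * (q1*e1*(q2*e2)*s) =
    (N1^+4 * (D0^+4*(q1*e1))) * (N2^+4 * (D0^+4*(q2*e2))) * s^+3 by ring.
  rewrite K1 K2; ring.
have Wpos : 0 < N1^+4 * N2^+4 * D0^+8 * s^+2.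
  apply: mulr_gt0; [apply: mulr_gt0; [apply: mulr_gt0|]|]; try exact: exprn_gt0; by rewrite exprn_even_gt0.
rewrite -(pmulr_rle0 _ Wpos) W.
have hX : 0 <= mu1^+4*mu2^+4*K^+2 by apply: mulr_ge0; [apply: mulr_ge0|]; exact: exprn_even_ge0.
rewrite !mulNr oppr_le0; apply: mulr_ge0 => //; apply: mulr_ge0 => //.
Qed.
Definition ss {R : realDomainType} (x y z : R) := (0 < x /\ 0 < y /\ 0 < z) \/ (x < 0 /\ y < 0 /\ z < 0).
Lemma nzs (R : realDomainType) (x : R) : x != 0 -> 0 < x \/ x < 0.
Proof. by rewrite neq_lt => /orP [h|h]; [right|left]. Qed.
Lemma sgn4 (R : realFieldType) (a b c d : R) : a != 0 -> b != 0 -> c != 0 -> d != 0 -> a*b*c*d < 0 ->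
  ss a b c \/ ss a b d \/ ss a c d \/ ss b c d.
Proof.
rewrite /ss => /nzs [] ha /nzs [] hb /nzs [] hc /nzs [] hd hp.
all: try by (left; left; tauto) || (right; left; left; tauto) || (right;right;left;left;tauto) || (right;right;right;left;tauto)
   || (left; right; tauto) || (right; left; right; tauto) || (right;right;left;right;tauto) || (right;right;right;right;tauto).
all: exfalso; move: hp; rewrite -!mulrA.
all: try rewrite (pmulr_rlt0 _ ha).
all: try rewrite (nmulr_rlt0 _ ha).
all: try rewrite (pmulr_rgt0 _ ha).
all: try rewrite (nmulr_rgt0 _ ha).
all: try rewrite (pmulr_rlt0 _ hb).
all: try rewrite (nmulr_rlt0 _ hb).
all: try rewrite (pmulr_rgt0 _ hb).
all: try rewrite (nmulr_rgt0 _ hb).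
all: try rewrite (pmulr_rlt0 _ hc).
all: try rewrite (nmulr_rlt0 _ hc).
all: try rewrite (pmulr_rgt0 _ hc).
all: try rewrite (nmulr_rgt0 _ hc).
all: lra.
Qed.

Section S.
Variable R : realType.
Notation vec := 'rV[R]_3.
Lemma mx3E (u v w : vec) (i j : 'I_3) : mx3 u v w i j =
  if val i == 0%N then u 0 j else if val i == 1%N then v 0 j else w 0 j.
Proof.
rewrite /mx3.
case: i => [[|[|[|i]]] Hi] //=.
- rewrite (_ : Ordinal Hi = @lshift 1 (1+1) 0); last by apply/val_inj.
  exact: col_mxEu.
- rewrite (_ : Ordinal Hi = @rshift 1 (1+1) 0); last by apply/val_inj.
  rewrite (col_mxEd u (col_mx v w) 0 j) (_ : (0 : 'I_2) = @lshift 1 1 0); last by apply/val_inj.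
  exact: col_mxEu.
- rewrite (_ : Ordinal Hi = @rshift 1 (1+1) 1); last by apply/val_inj.
  rewrite (col_mxEd u (col_mx v w) 1 j) (_ : (1 : 'I_2) = @rshift 1 1 0); last by apply/val_inj.
  exact: col_mxEd.
Qed.

Lemma det3 (A : 'M[R]_3) : \det A =
  A 0 0 * (A 1 1 * A 2 2 - A 1 2 * A 2 1) - A 0 1 * (A 1 0 * A 2 2 - A 1 2 * A 2 0)
  + A 0 2 * (A 1 0 * A 2 1 - A 1 1 * A 2 0).
Proof.
have det2 (B : 'M[R]_2) : \det B = B 0 0 * B 1 1 - B 0 1 * B 1 0.
  pose f (i j : nat) := B (inord i) (inord j).
  have hA : forall i j, B i j = f i j by move=> i j; rewrite /f !inord_val.
  rewrite (expand_det_row _ 0) !big_ord_recl big_ord0 /= addr0 /cofactor !det_mx11 !mxE /=.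
  rewrite !hA /= /bump /=. ring.
pose f (i j : nat) := A (inord i) (inord j).
have hA : forall i j, A i j = f i j by move=> i j; rewrite /f !inord_val.
rewrite (expand_det_row _ 0) !big_ord_recl big_ord0 /= addr0 /cofactor !det2 !mxE /=.
rewrite !hA /= /bump /=. ring.
Qed.

Definition d3 (u v w : vec) : R :=
  u 0 0 * (v 0 1 * w 0 2 - v 0 2 * w 0 1) - u 0 1 * (v 0 0 * w 0 2 - v 0 2 * w 0 0)
  + u 0 2 * (v 0 0 * w 0 1 - v 0 1 * w 0 0).

Lemma DE (u v w : vec) : \det (mx3 u v w) = d3 u v w.
Proof. by rewrite det3 !mx3E /=. Qed.

Definition B (M : 'M[R]_3) (x y : vec) : R := (x *m M *m y^T) 0 0.

Lemma BE M x y : B M x y =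
  x 0 0 * (M 0 0 * y 0 0 + M 0 1 * y 0 1 + M 0 2 * y 0 2) +
  x 0 1 * (M 1 0 * y 0 0 + M 1 1 * y 0 1 + M 1 2 * y 0 2) +
  x 0 2 * (M 2 0 * y 0 0 + M 2 1 * y 0 1 + M 2 2 * y 0 2).
Proof.
rewrite /B !mxE !big_ord_recl big_ord0 /=.
pose f (i j : nat) := M (inord i) (inord j).
have hA : forall i j, M i j = f i j by move=> i j; rewrite /f !inord_val.
pose g (i : nat) := x 0 (inord i).
have hx : forall i, x 0 i = g i by move=> i; rewrite /g !inord_val.
pose h (i : nat) := y 0 (inord i).
have hy : forall i, y 0 i = h i by move=> i; rewrite /h !inord_val.
rewrite !mxE !big_ord_recl !big_ord0.
rewrite !hA !hx !hy /= /bump /=. ring.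
Qed.

Lemma qfB M x : qf M x = B M x x. Proof. by []. Qed.

Lemma linE (a x : vec) : lin a x = x 0 0 * a 0 0 + x 0 1 * a 0 1 + x 0 2 * a 0 2.
Proof.
rewrite /lin !mxE !big_ord_recl big_ord0 !mxE.
pose g (i : nat) := x 0 (inord i).
have hx : forall i, x 0 i = g i by move=> i; rewrite /g !inord_val.
pose h (i : nat) := a 0 (inord i).
have hy : forall i, a 0 i = h i by move=> i; rewrite /h !inord_val.
rewrite !hx !hy /= /bump /=. ring.
Qed.

Lemma symE (M : 'M[R]_3) : M^T = M -> [/\ M 1 0 = M 0 1, M 2 0 = M 0 2 & M 2 1 = M 1 2].
Proof.
move=> hM; split.
- by have := congr1 (fun A : 'M[R]_3 => A 0 1) hM; rewrite mxE.
- by have := congr1 (fun A : 'M[R]_3 => A 0 2) hM; rewrite mxE.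
- by have := congr1 (fun A : 'M[R]_3 => A 1 2) hM; rewrite mxE.
Qed.

Section Frame.
Variables j k l : vec.
Definition D0 := d3 j k l.
Definition r0 z := d3 z k l * d3 j z l.
Definition r1 z := d3 z k l * d3 j k z.
Definition r2 z := d3 j z l * d3 j k z.

Lemma K1 (M : 'M[R]_3) z : M^T = M ->
  D0 ^+ 2 * qf M z = 2 * (B M j k * r0 z + B M j l * r1 z + B M k l * r2 z)
   + d3 z k l ^+ 2 * qf M j + d3 j z l ^+ 2 * qf M k + d3 j k z ^+ 2 * qf M l.
Proof.
move=> /symE [e1 e2 e3]; rewrite /D0 /r0 /r1 /r2 !qfB !BE e1 e2 e3 /d3; ring.
Qed.

Lemma K2 (M : 'M[R]_3) : M^T = M ->
  D0 ^+ 2 * \det M = qf M j * (qf M k * qf M l - B M k l ^+ 2)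
    - B M j k * (B M j k * qf M l - B M k l * B M j l)
    + B M j l * (B M j k * B M k l - qf M k * B M j l).
Proof.
move=> /symE [e1 e2 e3]; rewrite /D0 det3 !qfB !BE e1 e2 e3 /d3; ring.
Qed.

Lemma Fl m y : d3 m k l * d3 j y l - d3 j m l * d3 y k l = D0 * d3 l m y.
Proof. rewrite /D0 /d3; ring. Qed.
Lemma Fk m y : d3 j k m * d3 y k l - d3 m k l * d3 j k y = D0 * d3 k m y.
Proof. rewrite /D0 /d3; ring. Qed.
Lemma Fj m y : d3 j m l * d3 j k y - d3 j k m * d3 j y l = D0 * d3 j m y.
Proof. rewrite /D0 /d3; ring. Qed.
End Frame.

Lemma d3Zl s u v w : d3 (s *: u) v w = s * d3 u v w.
Proof. rewrite /d3 !mxE; ring. Qed.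
Lemma d3Zm s u v w : d3 u (s *: v) w = s * d3 u v w.
Proof. rewrite /d3 !mxE; ring. Qed.
Lemma d3Zr s u v w : d3 u v (s *: w) = s * d3 u v w.
Proof. rewrite /d3 !mxE; ring. Qed.
Lemma qfZ (M : 'M[R]_3) s u : qf M (s *: u) = s ^+ 2 * qf M u.
Proof. rewrite !qfB !BE !mxE; ring. Qed.
Lemma d3C u v w : d3 u v w = d3 v w u.
Proof. rewrite /d3; ring. Qed.
Lemma d3A u v w : d3 u v w = - d3 v u w.
Proof. rewrite /d3; ring. Qed.

Lemma four (a b c d : vec) (t : 'I_3) :
  d3 b c d * a 0 t - d3 a c d * b 0 t + d3 a b d * c 0 t - d3 a b c * d 0 t = 0.
Proof.
pose g (u : vec) (i : nat) := u 0 (inord i).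
have hx : forall (u : vec) (i : 'I_3), u 0 i = g u i by move=> u i; rewrite /g !inord_val.
rewrite /d3 !hx.
case: t => [[|[|[|i]]] Hi] //=; ring.
Qed.

Lemma sum3 (V : zmodType) (i1 i2 i3 : 'I_7) (A B C : V) : i1 != i2 -> i1 != i3 -> i2 != i3 ->
 \sum_j (if j == i1 then A else if j == i2 then B else if j == i3 then C else 0) = A + B + C.
Proof.
move=> h12 h13 h23.
rewrite (bigD1 i1) //= eqxx (bigD1 i2) /=; last by rewrite eq_sym.
rewrite eqxx eq_sym (negPf h12) (bigD1 i3) /=; last by rewrite ![i3 == _]eq_sym h13 h23.
rewrite eqxx eq_sym (negPf h13) eq_sym (negPf h23) big1 ?addr0 ?addrA // => j /andP [/andP [hj1 hj2] hj3].
by rewrite (negPf hj1) (negPf hj2) (negPf hj3).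
Qed.


Lemma conv3 (Y : 'I_7 -> vec) (a : vec) : (forall i, lin a (Y i) = 1) -> convex_position Y ->
  forall i1 i2 i3 i4 : 'I_7, i1 != i2 -> i1 != i3 -> i2 != i3 -> i4 != i1 -> i4 != i2 -> i4 != i3 ->
  forall c1 c2 c3 c4 : R, ss c1 c2 c3 ->
  (forall t, c1 * Y i1 0 t + c2 * Y i2 0 t + c3 * Y i3 0 t + c4 * Y i4 0 t = 0) -> False.
Proof.
move=> hlin hcv i1 i2 i3 i4 h12 h13 h23 h41 h42 h43.
suff pos : forall c1 c2 c3 c4 : R, 0 < c1 -> 0 < c2 -> 0 < c3 ->
  (forall t, c1 * Y i1 0 t + c2 * Y i2 0 t + c3 * Y i3 0 t + c4 * Y i4 0 t = 0) -> False.
  move=> c1 c2 c3 c4 [[p1 [p2 p3]]|[p1 [p2 p3]]] E; first exact: (pos c1 c2 c3 c4).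
  apply: (pos (-c1) (-c2) (-c3) (-c4)); rewrite ?oppr_gt0 // => t.
  by rewrite !mulNr -!opprD E oppr0.
move=> c1 c2 c3 c4 p1 p2 p3 E.
have hsum : c1 + c2 + c3 + c4 = 0.
  have := hlin i1; have := hlin i2; have := hlin i3; have := hlin i4; rewrite !linE => l4 l3 l2 l1.
  have -> : c1 + c2 + c3 + c4 = c1 * lin a (Y i1) + c2 * lin a (Y i2) + c3 * lin a (Y i3) + c4 * lin a (Y i4).
    by rewrite !hlin; ring.
  rewrite !linE.
  have -> : forall u v w z : vec, c1 * (u 0 0 * a 0 0 + u 0 1 * a 0 1 + u 0 2 * a 0 2) +
     c2 * (v 0 0 * a 0 0 + v 0 1 * a 0 1 + v 0 2 * a 0 2) +
     c3 * (w 0 0 * a 0 0 + w 0 1 * a 0 1 + w 0 2 * a 0 2) +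
     c4 * (z 0 0 * a 0 0 + z 0 1 * a 0 1 + z 0 2 * a 0 2) =
     (c1 * u 0 0 + c2 * v 0 0 + c3 * w 0 0 + c4 * z 0 0) * a 0 0 +
     (c1 * u 0 1 + c2 * v 0 1 + c3 * w 0 1 + c4 * z 0 1) * a 0 1 +
     (c1 * u 0 2 + c2 * v 0 2 + c3 * w 0 2 + c4 * z 0 2) * a 0 2.
    by move=> u v w z; ring.
  by rewrite !E; ring.
set s := c1 + c2 + c3.
have spos : 0 < s by rewrite /s; lra.
have snz : s != 0 by rewrite gt_eqF.
apply: (hcv i4).
exists (fun j => if j == i1 then c1 / s else if j == i2 then c2 / s else if j == i3 then c3 / s else 0).
split.
  move=> j; case: ifP => _; first by rewrite divr_ge0 ?ltW.
  case: ifP => _; first by rewrite divr_ge0 ?ltW.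
  case: ifP => _; first by rewrite divr_ge0 ?ltW.
  by [].
split; first by rewrite (negPf h41) (negPf h42) (negPf h43).
split; first by rewrite sum3 // -!mulrDl divff.
rewrite (eq_bigr (fun j => if j == i1 then (c1 / s) *: Y i1 else if j == i2 then (c2 / s) *: Y i2
   else if j == i3 then (c3 / s) *: Y i3 else 0)); last first.
  by move=> j _; do 3! (case: eqP => [->|_]) => //; rewrite scale0r.
rewrite sum3 //; apply/rowP => t; rewrite !mxE.
have c4E : c4 = - s by rewrite /s; lra.
have := E t; rewrite c4E => Et.
apply/subr0_eq.
have -> : c1 / s * Y i1 0 t + c2 / s * Y i2 0 t + c3 / s * Y i3 0 t - Y i4 0 t =
  (c1 * Y i1 0 t + c2 * Y i2 0 t + c3 * Y i3 0 t + - s * Y i4 0 t) / s.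
  by field.
by rewrite Et mul0r.
Qed.

End S.

Section S2.
Variable R : realType.
Notation vec := 'rV[R]_3.
Ltac nq := try assumption; try (rewrite eq_sym; assumption).

Lemma F1 (Y : 'I_7 -> vec) (a : vec) : (forall i, lin a (Y i) = 1) -> convex_position Y ->
  forall i1 i2 i3 i4 : 'I_7, i1 != i2 -> i1 != i3 -> i1 != i4 -> i2 != i3 -> i2 != i4 -> i3 != i4 ->
  d3 (Y i1) (Y i2) (Y i3) != 0 -> d3 (Y i1) (Y i2) (Y i4) != 0 ->
  d3 (Y i1) (Y i3) (Y i4) != 0 -> d3 (Y i2) (Y i3) (Y i4) != 0 ->
  0 < d3 (Y i1) (Y i2) (Y i3) * d3 (Y i1) (Y i2) (Y i4) * d3 (Y i1) (Y i3) (Y i4) * d3 (Y i2) (Y i3) (Y i4).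
Proof.
move=> hlin hcv i1 i2 i3 i4 h12 h13 h14 h23 h24 h34.
set A := d3 _ _ (Y i3); set Bq := d3 _ _ (Y i4); set C := d3 (Y i1) (Y i3) _; set D := d3 (Y i2) _ _.
move=> nA nB nC nD.
have E : forall t, D * Y i1 0 t + (-C) * Y i2 0 t + Bq * Y i3 0 t + (-A) * Y i4 0 t = 0.
  by move=> t; have h := four (Y i1) (Y i2) (Y i3) (Y i4) t; rewrite -h /A /Bq /C /D; ring.
have [//|hle] := ltrP 0 (A*Bq*C*D).
have hlt : D*(-C)*Bq*(-A) < 0.
  have -> : D*(-C)*Bq*(-A) = A*Bq*C*D by ring.
  by rewrite lt_def hle andbT eq_sym !mulf_neq0.
have nC' : -C != 0 by rewrite oppr_eq0.
have nA' : -A != 0 by rewrite oppr_eq0.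
exfalso; case: (sgn4 nD nC' nB nA' hlt) => [h|[h|[h|h]]].
- apply: (conv3 hlin hcv h12 h13 h23 (_ : i4 != i1) (_ : i4 != i2) (_ : i4 != i3) h E).
  all: nq.
- apply: (conv3 (c4:=Bq) hlin hcv h12 h14 h24 (_ : i3 != i1) (_ : i3 != i2) (_ : i3 != i4) h); try nq.
  by move=> t; rewrite -[RHS](E t); ring.
- apply: (conv3 (c4:=-C) hlin hcv h13 h14 h34 (_ : i2 != i1) (_ : i2 != i3) (_ : i2 != i4) h); try nq.
  by move=> t; rewrite -[RHS](E t); ring.
- apply: (conv3 (c4:=D) hlin hcv h23 h24 h34 (_ : i1 != i2) (_ : i1 != i3) (_ : i1 != i4) h); try nq.
  by move=> t; rewrite -[RHS](E t); ring.
Qed.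
End S2.

Ltac nq := try assumption; try (rewrite eq_sym; assumption).
Section S2.
Variable R : realType.
Notation vec := 'rV[R]_3.
Lemma K1z (j k l z : vec) (M : 'M[R]_3) : M^T = M -> qf M j = 0 -> qf M k = 0 -> qf M l = 0 ->
  D0 j k l ^+ 2 * qf M z = 2 * (B M j k * r0 j k l z + B M j l * r1 j k l z + B M k l * r2 j k l z).
Proof. by move=> hs hj hk hl; rewrite K1 // hj hk hl !mulr0 !addr0. Qed.

Lemma K1m (j k l z : vec) (M : 'M[R]_3) : M^T = M -> qf M j = 0 -> qf M k = 0 -> qf M l = 0 ->
  qf M z = 0 -> B M j k * r0 j k l z + B M j l * r1 j k l z + B M k l * r2 j k l z = 0.
Proof.
move=> hs hj hk hl hz; have := K1z z hs hj hk hl; rewrite hz mulr0 => /esym /eqP.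
by rewrite mulf_eq0 pnatr_eq0 /= => /eqP.
Qed.

Lemma K2z (j k l : vec) (M : 'M[R]_3) : M^T = M -> qf M j = 0 -> qf M k = 0 -> qf M l = 0 ->
  D0 j k l ^+ 2 * \det M = 2 * (B M j k * B M j l * B M k l).
Proof. by move=> hs hj hk hl; rewrite K2 // hj hk hl; ring. Qed.

Lemma PLv (Y : 'I_7 -> vec) (j k l m x y : 'I_7) (M1 M2 : 'M[R]_3) :
  (forall a b c : 'I_7, a != b -> b != c -> a != c -> d3 (Y a) (Y b) (Y c) != 0) ->
  (forall a b c d : 'I_7, a != b -> a != c -> a != d -> b != c -> b != d -> c != d ->
     0 < d3 (Y a) (Y b) (Y c) * d3 (Y a) (Y b) (Y d) * d3 (Y a) (Y c) (Y d) * d3 (Y b) (Y c) (Y d)) ->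
  j != k -> j != l -> j != m -> j != x -> j != y -> k != l -> k != m -> k != x -> k != y ->
  l != m -> l != x -> l != y -> m != x -> m != y -> x != y ->
  M1^T = M1 -> M2^T = M2 ->
  qf M1 (Y j) = 0 -> qf M1 (Y k) = 0 -> qf M1 (Y l) = 0 -> qf M1 (Y m) = 0 -> qf M1 (Y y) = 0 ->
  qf M2 (Y j) = 0 -> qf M2 (Y k) = 0 -> qf M2 (Y l) = 0 -> qf M2 (Y m) = 0 -> qf M2 (Y x) = 0 ->
  qf M1 (Y x) * \det M1 * (qf M2 (Y y) * \det M2) *
   (d3 (Y x) (Y y) (Y j) * d3 (Y x) (Y y) (Y k) * d3 (Y x) (Y y) (Y l) * d3 (Y x) (Y y) (Y m)) <= 0.
Proof.
move=> hnz hc4 hjk hjl hjm hjx hjy hkl hkm hkx hky hlm hlx hly hmx hmy hxy hs1 hs2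
  h1j h1k h1l h1m h1y h2j h2k h2l h2m h2x.
have cv : forall a b c d : 'I_7, a != b -> a != c -> a != d -> b != c -> b != d -> c != d ->
  forall X, d3 (Y a) (Y b) (Y c) * d3 (Y a) (Y b) (Y d) * d3 (Y a) (Y c) (Y d) * d3 (Y b) (Y c) (Y d) = X -> 0 < X.
  by move=> a b c d ? ? ? ? ? ? X <-; apply: hc4.
apply: (@PLs R (d3 (Y j) (Y k) (Y l))
   (d3 (Y m) (Y k) (Y l)) (d3 (Y j) (Y m) (Y l)) (d3 (Y j) (Y k) (Y m))
   (d3 (Y x) (Y k) (Y l)) (d3 (Y j) (Y x) (Y l)) (d3 (Y j) (Y k) (Y x))
   (d3 (Y y) (Y k) (Y l)) (d3 (Y j) (Y y) (Y l)) (d3 (Y j) (Y k) (Y y))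
   (B M1 (Y j) (Y k)) (B M1 (Y j) (Y l)) (B M1 (Y k) (Y l))
   (B M2 (Y j) (Y k)) (B M2 (Y j) (Y l)) (B M2 (Y k) (Y l))
   _ _ _ _
   (d3 (Y j) (Y m) (Y y)) (d3 (Y k) (Y m) (Y y)) (d3 (Y l) (Y m) (Y y))
   (d3 (Y j) (Y m) (Y x)) (d3 (Y k) (Y m) (Y x)) (d3 (Y l) (Y m) (Y x))).
- by apply: hnz.
- by apply: hnz.
- by apply: hnz.
- by apply: hnz.
- by apply: hnz.
- by apply: hnz.
- exact: (K1z (Y x) hs1 h1j h1k h1l).
- exact: (K2z hs1 h1j h1k h1l).
- exact: (K1m hs1 h1j h1k h1l h1m).
- exact: (K1m hs1 h1j h1k h1l h1y).
- exact: (K1z (Y y) hs2 h2j h2k h2l).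
- exact: (K2z hs2 h2j h2k h2l).
- exact: (K1m hs2 h2j h2k h2l h2m).
- exact: (K1m hs2 h2j h2k h2l h2x).
- exact: Fl.
- exact: Fk.
- exact: Fj.
- exact: Fl.
- exact: Fk.
- exact: Fj.
- apply: (cv x y k l); try nq; rewrite /d3; ring.
- apply: (cv x y j l); try nq; rewrite /d3; ring.
- apply: (cv x y j k); try nq; rewrite /d3; ring.
- apply: (cv x y j m); try nq; rewrite /d3; ring.
- apply: (cv x y k m); try nq; rewrite /d3; ring.
- apply: (cv x y l m); try nq; rewrite /d3; ring.
Qed.
End S2.

Section S2.
Variable R : realType.
Notation vec := 'rV[R]_3.
Lemma rowmx3 (u v w : vec) : [/\ row 0 (mx3 u v w) = u, row 1 (mx3 u v w) = v & row 2 (mx3 u v w) = w].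
Proof. by split; apply/rowP => t; rewrite mxE mx3E. Qed.

Lemma entryB (U M : 'M[R]_3) (a b : 'I_3) : (U *m M *m U^T) a b = B M (row a U) (row b U).
Proof.
rewrite /B !mxE; apply: eq_bigr => i _; rewrite !mxE; congr (_ * _).
by apply: eq_bigr => t _; rewrite !mxE.
Qed.

Definition Nmx (n0 n1 n2 : R) : 'M[R]_3 :=
  \matrix_(a < 3, b < 3) nth 0 (nth [::] [:: [:: 0; n0; n1]; [:: n0; 0; n2]; [:: n1; n2; 0]] a) b.

Lemma NmxT n0 n1 n2 : (Nmx n0 n1 n2)^T = Nmx n0 n1 n2.
Proof.
apply/matrixP => a b; rewrite !mxE.
by case: a => [[|[|[|a]]] Ha] //; case: b => [[|[|[|b]]] Hb].
Qed.

Lemma Nmx_det n0 n1 n2 : \det (Nmx n0 n1 n2) = 2 * (n0 * n1 * n2).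
Proof. rewrite det3 !mxE /=; ring. Qed.

Lemma Nmx_entries n0 n1 n2 : let N := Nmx n0 n1 n2 in
  [/\ N 0 0 = 0, N 1 1 = 0, N 2 2 = 0 & [/\ N 0 1 = n0, N 0 2 = n1 & N 1 2 = n2]].
Proof. by rewrite /= !mxE. Qed.

Lemma congM (U N : 'M[R]_3) : U *m (\adj U *m N *m (\adj U)^T) *m U^T = (\det U ^+ 2) *: N.
Proof.
rewrite !mulmxA mul_mx_adj -!mulmxA -trmx_mul mul_mx_adj tr_scalar_mx.
by rewrite mul_scalar_mx mul_mx_scalar scalerA expr2.
Qed.
End S2.

Section S2.
Variable R : realType.
Notation vec := 'rV[R]_3.
Lemma CONS (Y : 'I_7 -> vec) (j k l m y : 'I_7) :
  (forall a b c : 'I_7, a != b -> b != c -> a != c -> d3 (Y a) (Y b) (Y c) != 0) ->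
  j != k -> j != l -> j != m -> j != y -> k != l -> k != m -> k != y ->
  l != m -> l != y -> m != y ->
  exists M : 'M[R]_3, [/\ M^T = M, \det M != 0, qf M (Y j) = 0, qf M (Y k) = 0 &
     [/\ qf M (Y l) = 0, qf M (Y m) = 0 & qf M (Y y) = 0]].
Proof.
move=> hnz hjk hjl hjm hjy hkl hkm hky hlm hly hmy.
set U := mx3 (Y j) (Y k) (Y l).
have hU : \det U = D0 (Y j) (Y k) (Y l) by rewrite DE.
have hD : D0 (Y j) (Y k) (Y l) != 0 by apply: hnz.
pose R0 z := r0 (Y j) (Y k) (Y l) z.
pose R1 z := r1 (Y j) (Y k) (Y l) z.
pose R2 z := r2 (Y j) (Y k) (Y l) z.
pose n0 := R1 (Y m) * R2 (Y y) - R2 (Y m) * R1 (Y y).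
pose n1 := R2 (Y m) * R0 (Y y) - R0 (Y m) * R2 (Y y).
pose n2 := R0 (Y m) * R1 (Y y) - R1 (Y m) * R0 (Y y).
pose N := Nmx n0 n1 n2.
pose M := \adj U *m N *m (\adj U)^T.
have hT : M^T = M by rewrite /M !trmx_mul trmxK NmxT mulmxA.
have hC : U *m M *m U^T = (\det U ^+ 2) *: N by rewrite congM.
have hB : forall a b, B M (row a U) (row b U) = \det U ^+ 2 * N a b.
  by move=> a b; rewrite -entryB hC mxE.
have [r0U r1U r2U] : [/\ row 0 U = Y j, row 1 U = Y k & row 2 U = Y l] := rowmx3 _ _ _.
have [N00 N11 N22 [N01 N02 N12]] := Nmx_entries n0 n1 n2.
have qj : qf M (Y j) = 0 by have := hB 0 0; rewrite r0U N00 mulr0.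
have qk : qf M (Y k) = 0 by have := hB 1 1; rewrite r1U N11 mulr0.
have ql : qf M (Y l) = 0 by have := hB 2 2; rewrite r2U N22 mulr0.
have Bjk : B M (Y j) (Y k) = \det U ^+ 2 * n0 by have := hB 0 1; rewrite r0U r1U N01.
have Bjl : B M (Y j) (Y l) = \det U ^+ 2 * n1 by have := hB 0 2; rewrite r0U r2U N02.
have Bkl : B M (Y k) (Y l) = \det U ^+ 2 * n2 by have := hB 1 2; rewrite r1U r2U N12.
have qz : forall z, (R0 z * n0 + R1 z * n1 + R2 z * n2 = 0) -> qf M z = 0.
  move=> z hz; have := K1z z hT qj qk ql; rewrite Bjk Bjl Bkl.
  have -> : 2 * (\det U ^+ 2 * n0 * r0 (Y j) (Y k) (Y l) z + \det U ^+ 2 * n1 * r1 (Y j) (Y k) (Y l) z +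
     \det U ^+ 2 * n2 * r2 (Y j) (Y k) (Y l) z) = 2 * \det U ^+ 2 * (R0 z * n0 + R1 z * n1 + R2 z * n2).
    by rewrite /R0 /R1 /R2; ring.
  rewrite hz mulr0 => /eqP; rewrite mulf_eq0 expf_eq0 (negPf hD) andbF /= => /eqP //.
have qm : qf M (Y m) = 0 by apply: qz; rewrite /n0 /n1 /n2; ring.
have qy : qf M (Y y) = 0 by apply: qz; rewrite /n0 /n1 /n2; ring.
exists M; split => //.
have E0 : n0 = d3 (Y j) (Y k) (Y m) * d3 (Y j) (Y k) (Y y) * (D0 (Y j) (Y k) (Y l) * d3 (Y l) (Y m) (Y y)).
  by rewrite -Fl /n0 /R1 /R2 /r1 /r2; ring.
have E1 : n1 = d3 (Y j) (Y m) (Y l) * d3 (Y j) (Y y) (Y l) * (D0 (Y j) (Y k) (Y l) * d3 (Y k) (Y m) (Y y)).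
  by rewrite -Fk /n1 /R0 /R2 /r0 /r2; ring.
have E2 : n2 = d3 (Y m) (Y k) (Y l) * d3 (Y y) (Y k) (Y l) * (D0 (Y j) (Y k) (Y l) * d3 (Y j) (Y m) (Y y)).
  by rewrite -Fj /n2 /R0 /R1 /r0 /r1; ring.
have nn0 : n0 != 0 by rewrite E0 !mulf_neq0 //; apply: hnz; nq.
have nn1 : n1 != 0 by rewrite E1 !mulf_neq0 //; apply: hnz; nq.
have nn2 : n2 != 0 by rewrite E2 !mulf_neq0 //; apply: hnz; nq.
have := congr1 determinant hC.
rewrite !det_mulmx det_tr detZ Nmx_det => hdet.
apply/eqP => hM; move: hdet; rewrite hM mulr0 mul0r => /esym /eqP.
apply/negP; apply: mulf_neq0; first by do 2 apply: expf_neq0; rewrite hU.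
by rewrite mulf_neq0 ?pnatr_eq0 // !mulf_neq0.
Qed.
End S2.

Section S2.
Variable R : realType.
Notation vec := 'rV[R]_3.
Lemma linZ (a x : vec) s : lin a (s *: x) = s * lin a x.
Proof. rewrite !linE !mxE; ring. Qed.

Section Main.
Variables (P : 'I_7 -> vec) (a : vec).
Let Y := fun i => chart a (P i).

Lemma Ylin : (forall i, lin a (P i) <> 0) -> forall i, lin a (Y i) = 1.
Proof. by move=> h i; rewrite /Y /chart linZ mulVf //; apply/eqP. Qed.

Lemma PY : (forall i, lin a (P i) <> 0) -> forall i, P i = lin a (P i) *: Y i.
Proof. by move=> h i; rewrite /Y /chart scalerA divff ?scale1r //; apply/eqP. Qed.

Lemma qfPY (M : 'M[R]_3) : (forall i, lin a (P i) <> 0) -> forall i,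
  qf M (P i) = lin a (P i) ^+ 2 * qf M (Y i).
Proof. by move=> h i; rewrite {1}(PY h i) qfZ. Qed.

Lemma qfPY0 (M : 'M[R]_3) : (forall i, lin a (P i) <> 0) -> forall i,
  (qf M (P i) = 0) <-> (qf M (Y i) = 0).
Proof.
move=> h i; rewrite qfPY //; split; last by move=> ->; rewrite mulr0.
move/eqP; rewrite mulf_eq0 expf_eq0 /= => /orP [/eqP hi|/eqP //].
by case: (h i).
Qed.

Lemma qfPYsign (M : 'M[R]_3) (e : R) : (forall i, lin a (P i) <> 0) -> forall i,
  (qf M (P i) * e < 0) <-> (qf M (Y i) * e < 0).
Proof.
move=> h i; rewrite qfPY // -mulrA pmulr_rlt0 //.
by rewrite exprn_even_gt0 //; apply/eqP.
Qed.

Lemma hnzY : typical P -> (forall i, lin a (P i) <> 0) ->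
  forall i j k : 'I_7, i != j -> j != k -> i != k -> d3 (Y i) (Y j) (Y k) != 0.
Proof.
move=> [_ [hcol _]] hl i j k /eqP hij /eqP hjk /eqP hik.
have := hcol i j k hij hjk hik; rewrite /collinear3 DE (PY hl i) (PY hl j) (PY hl k).
rewrite d3Zl d3Zm d3Zr => hn; apply/eqP => h0; apply: hn; rewrite h0; ring.
Qed.

Lemma sy (u v : 'I_7) : u != v -> v != u. Proof. by rewrite eq_sym. Qed.

Lemma Hpos : typical P -> (forall i, lin a (P i) <> 0) ->
  forall x y q j k l m : 'I_7, 
  j != k -> j != l -> j != m -> j != y -> k != l -> k != m -> k != y -> l != m -> l != y -> m != y ->
  (forall t, t != x -> t != q -> t = y \/ t = j \/ t = k \/ t = l \/ t = m) ->
  ~ outside_Q P x q ->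
  exists M : 'M[R]_3, [/\ M^T = M, (forall t, t != x -> t != q -> qf M (P t) = 0) &
     0 < qf M (Y x) * \det M].
Proof.
move=> htyp hl x y q j k l m hjk hjl hjm hjy hkl hkm hky hlm hly hmy hcov hno.
have hnz := hnzY htyp hl.
have [M [hs hd qj qk [ql qm qy]]] := CONS hnz hjk hjl hjm hjy hkl hkm hky hlm hly hmy.
have hv : forall t, t != x -> t != q -> qf M (P t) = 0.
  move=> t h1 h2; apply/(qfPY0 _ hl).
  by case: (hcov t h1 h2) => [->|[->|[->|[->|->]]]].
exists M; split => //.
have hM0 : M <> 0 by move=> h0; move: hd; rewrite h0 det0 eqxx.
have hq : qf M (Y x) != 0.
  apply/eqP => h0; case: htyp => _ [_ hsix]; apply: (hsix q M (conj hs hM0)).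
  move=> t /eqP htq; case: (eqVneq t x) => [->|htx]; first by apply/(qfPY0 _ hl).
  exact: hv.
have hge : 0 <= qf M (Y x) * \det M.
  rewrite leNgt; apply/negP => hlt; apply: hno.
  exists M; split; first by split.
  split; first by move=> t /eqP h1 /eqP h2; apply: hv.
  by split; [apply/eqP | apply/(qfPYsign _ _ hl)].
by rewrite lt_def hge andbT mulf_neq0.
Qed.

Lemma Gl : typical P -> (forall i, lin a (P i) <> 0) -> convex_position Y ->
  forall p p' q j k l m : 'I_7, p != p' ->
  q != p -> q != p' -> j != p -> j != p' -> k != p -> k != p' -> l != p -> l != p' -> m != p -> m != p' ->
  q != j -> q != k -> q != l -> q != m -> j != k -> j != l -> j != m -> k != l -> k != m -> l != m ->
  (forall t, t != p -> t != q -> t = p' \/ t = j \/ t = k \/ t = l \/ t = m) ->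
  0 < d3 (Y p) (Y p') (Y j) * d3 (Y p) (Y p') (Y k) * d3 (Y p) (Y p') (Y l) * d3 (Y p) (Y p') (Y m) ->
  ~ (outside_Q P p q /\ outside_Q P p' q) /\ ~ (~ outside_Q P p q /\ ~ outside_Q P p' q).
Proof.
move=> htyp hl hcv p p' q j k l m hpp hqp hqp' hjp hjp' hkp hkp' hlp hlp' hmp hmp'
  hqj hqk hql hqm hjk hjl hjm hkl hkm hlm hcov hsig.
have hnz := hnzY htyp hl.
have hlY := Ylin hl.
have hc4 : forall a b c d : 'I_7, a != b -> a != c -> a != d -> b != c -> b != d -> c != d ->
     0 < d3 (Y a) (Y b) (Y c) * d3 (Y a) (Y b) (Y d) * d3 (Y a) (Y c) (Y d) * d3 (Y b) (Y c) (Y d).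
  move=> a0 b0 c0 d0 h1 h2 h3 h4 h5 h6.
  by apply: (F1 hlY hcv) => //; apply: hnz; nq.
have key : forall M1 M2 : 'M[R]_3, M1^T = M1 -> M2^T = M2 ->
    (forall t, t != p -> t != q -> qf M1 (P t) = 0) ->
    (forall t, t != p' -> t != q -> qf M2 (P t) = 0) ->
    qf M1 (Y p) * \det M1 * (qf M2 (Y p') * \det M2) <= 0.
  move=> M1 M2 hs1 hs2 hv1 hv2.
  have v1 : forall t, t != p -> t != q -> qf M1 (Y t) = 0.
    by move=> t h1 h2; apply/(qfPY0 _ hl); apply: hv1.
  have v2 : forall t, t != p' -> t != q -> qf M2 (Y t) = 0.
    by move=> t h1 h2; apply/(qfPY0 _ hl); apply: hv2.
  have H := PLv hnz hc4 hjk hjl hjm hjp hjp' hkl hkm hkp hkp' hlm hlp hlp' hmp hmp' hpp hs1 hs2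
     (v1 j hjp (sy hqj)) (v1 k hkp (sy hqk)) (v1 l hlp (sy hql)) (v1 m hmp (sy hqm))
     (v1 p' (sy hpp) (sy hqp')) (v2 j hjp' (sy hqj)) (v2 k hkp' (sy hqk)) (v2 l hlp' (sy hql))
     (v2 m hmp' (sy hqm)) (v2 p hpp (sy hqp)).
  by rewrite -(pmulr_lle0 _ hsig).
split.
  case=> [[M1 [[hs1 _] [hv1 [hd1 hlt1]]]] [M2 [[hs2 _] [hv2 [hd2 hlt2]]]]].
  have w1 : forall t, t != p -> t != q -> qf M1 (P t) = 0 by move=> t /eqP h1 /eqP h2; exact: hv1.
  have w2 : forall t, t != p' -> t != q -> qf M2 (P t) = 0 by move=> t /eqP h1 /eqP h2; exact: hv2.
  have := key M1 M2 hs1 hs2 w1 w2.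
  move/(qfPYsign _ _ hl): hlt1 => hlt1; move/(qfPYsign _ _ hl): hlt2 => hlt2.
  by rewrite leNgt (nmulr_rgt0 _ hlt1) hlt2.
case=> hn1 hn2.
have [M1 [hs1 hv1 hp1]] := Hpos htyp hl hjk hjl hjm hjp' hkl hkm hkp' hlm hlp' hmp' hcov hn1.
have hcov' : forall t, t != p' -> t != q -> t = p \/ t = j \/ t = k \/ t = l \/ t = m.
  move=> t h1 h2; case: (eqVneq t p) => [->|h3]; first by left.
  by case: (hcov t h3 h2) => [e|]; [move: h1; rewrite e eqxx | right].
have [M2 [hs2 hv2 hp2]] := Hpos htyp hl hjk hjl hjm hjp hkl hkm hkp hlm hlp hmp hcov' hn2.
have := key M1 M2 hs1 hs2 hv1 hv2.
by rewrite leNgt (mulr_gt0 hp1 hp2).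
Qed.
End Main.
End S2.

Section S2.
Variable R : realType.
Notation vec := 'rV[R]_3.
Ltac sgnT ha hb hc hd he :=
  (try rewrite (pmulr_rgt0 _ ha)); (try rewrite (nmulr_rgt0 _ ha));
  (try rewrite (pmulr_rlt0 _ ha)); (try rewrite (nmulr_rlt0 _ ha));
  (try rewrite (pmulr_rgt0 _ hb)); (try rewrite (nmulr_rgt0 _ hb));
  (try rewrite (pmulr_rlt0 _ hb)); (try rewrite (nmulr_rlt0 _ hb));
  (try rewrite (pmulr_rgt0 _ hc)); (try rewrite (nmulr_rgt0 _ hc));
  (try rewrite (pmulr_rlt0 _ hc)); (try rewrite (nmulr_rlt0 _ hc));
  (try rewrite (pmulr_rgt0 _ hd)); (try rewrite (nmulr_rgt0 _ hd));
  (try rewrite (pmulr_rlt0 _ hd)); (try rewrite (nmulr_rlt0 _ hd));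
  solve [assumption].

Lemma five (a b c d e : R) : a != 0 -> b != 0 -> c != 0 -> d != 0 -> e != 0 ->
  0 < b*c*d*e \/ 0 < a*c*d*e \/ 0 < a*b*d*e \/ 0 < a*b*c*e \/ 0 < a*b*c*d.
Proof.
move=> /nzs [] ha /nzs [] hb /nzs [] hc /nzs [] hd /nzs [] he.
all: rewrite -!mulrA.
all: first [ (left; sgnT ha hb hc hd he) | (right; left; sgnT ha hb hc hd he)
   | (right; right; left; sgnT ha hb hc hd he) | (right; right; right; left; sgnT ha hb hc hd he)
   | (right; right; right; right; sgnT ha hb hc hd he) ].
Qed.
Section Main2.
Variables (P : 'I_7 -> vec) (a : vec).
Let Y := fun i => chart a (P i).

Lemma keyc : typical P -> (forall i, lin a (P i) <> 0) -> convex_position Y ->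
  forall p p' : 'I_7, p != p' -> exists q : 'I_7, q != p /\ q != p' /\
   ~ (outside_Q P p q /\ outside_Q P p' q) /\ ~ (~ outside_Q P p q /\ ~ outside_Q P p' q).
Proof.
move=> htyp hl hcv p p' hpp.
have hnz := hnzY htyp hl.
set A := [set i : 'I_7 | (i != p) && (i != p')].
have cA : #|A| = 5%N.
  have h6 : #|[set~ p]| = 6%N by rewrite cardsC1 card_ord.
  have -> : A = [set~ p] :\ p' by apply/setP => i; rewrite !inE andbC.
  by move: h6; rewrite (cardsD1 p') !inE (sy hpp) add1n => -[].
have hs : size (enum A) = 5%N by rewrite -cardE.
have hu := enum_uniq (pred_of_set A).
have hm : forall i, (i \in enum A) = (i != p) && (i != p') by move=> i; rewrite mem_enum inE.
move: hu hm; case: (enum A) hs => [|x1 [|x2 [|x3 [|x4 [|x5 [|? ?]]]]]] // _ hu hm.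
move: hu; rewrite /= !inE !negb_or => /andP[/and4P[h12 h13 h14 h15]
  /andP[/and3P[h23 h24 h25] /andP[/andP[h34 h35] /andP[h45 _]]]].
have /andP[h1p h1p'] : (x1 != p) && (x1 != p') by rewrite -hm !inE eqxx ?orbT.
have /andP[h2p h2p'] : (x2 != p) && (x2 != p') by rewrite -hm !inE eqxx ?orbT.
have /andP[h3p h3p'] : (x3 != p) && (x3 != p') by rewrite -hm !inE eqxx ?orbT.
have /andP[h4p h4p'] : (x4 != p) && (x4 != p') by rewrite -hm !inE eqxx ?orbT.
have /andP[h5p h5p'] : (x5 != p) && (x5 != p') by rewrite -hm !inE eqxx ?orbT.
have hmem : forall t, t != p -> t != p' -> t = x1 \/ t = x2 \/ t = x3 \/ t = x4 \/ t = x5.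
  move=> t h1 h2; have : t \in [:: x1; x2; x3; x4; x5] by rewrite hm h1 h2.
  by rewrite !inE => /orP[/eqP->|/orP[/eqP->|/orP[/eqP->|/orP[/eqP->|/eqP->]]]]; tauto.
have cov : forall q t : 'I_7, t != p -> t != q ->
    t = p' \/ t = x1 \/ t = x2 \/ t = x3 \/ t = x4 \/ t = x5.
  move=> q t h1 h2; case: (eqVneq t p') => [->|h3]; first by left.
  by right; case: (hmem t h1 h3) => [->|[->|[->|[->|->]]]]; tauto.
have ns : forall x, x != p -> x != p' -> d3 (Y p) (Y p') (Y x) != 0.
  by move=> x h1 h2; apply: hnz; nq.
case: (five (ns _ h1p h1p') (ns _ h2p h2p') (ns _ h3p h3p') (ns _ h4p h4p') (ns _ h5p h5p'))
  => [hs|[hs|[hs|[hs|hs]]]].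
- exists x1; split => //; split => //; apply: (Gl (p:=p) (p':=p') (q:=x1) (j:=x2) (k:=x3) (l:=x4) (m:=x5) htyp hl hcv hpp) => //; try nq.
  move=> t h1 h2; have := cov x1 t h1 h2.
  by case=> [->|[e|[->|[->|[->|->]]]]]; try tauto; move: h2; rewrite e eqxx.
- exists x2; split => //; split => //; apply: (Gl (p:=p) (p':=p') (q:=x2) (j:=x1) (k:=x3) (l:=x4) (m:=x5) htyp hl hcv hpp) => //; try nq.
  move=> t h1 h2; have := cov x2 t h1 h2.
  by case=> [->|[->|[e|[->|[->|->]]]]]; try tauto; move: h2; rewrite e eqxx.
- exists x3; split => //; split => //; apply: (Gl (p:=p) (p':=p') (q:=x3) (j:=x1) (k:=x2) (l:=x4) (m:=x5) htyp hl hcv hpp) => //; try nq.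
  move=> t h1 h2; have := cov x3 t h1 h2.
  by case=> [->|[->|[->|[e|[->|->]]]]]; try tauto; move: h2; rewrite e eqxx.
- exists x4; split => //; split => //; apply: (Gl (p:=p) (p':=p') (q:=x4) (j:=x1) (k:=x2) (l:=x3) (m:=x5) htyp hl hcv hpp) => //; try nq.
  move=> t h1 h2; have := cov x4 t h1 h2.
  by case=> [->|[->|[->|[->|[e|->]]]]]; try tauto; move: h2; rewrite e eqxx.
- exists x5; split => //; split => //; apply: (Gl (p:=p) (p':=p') (q:=x5) (j:=x1) (k:=x2) (l:=x3) (m:=x4) htyp hl hcv hpp) => //; try nq.
  move=> t h1 h2; have := cov x5 t h1 h2.
  by case=> [->|[->|[->|[->|[->|e]]]]]; try tauto; move: h2; rewrite e eqxx.
Qed.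
End Main2.

Lemma dom6 (P : 'I_7 -> vec) (p : 'I_7) : dominance P p = 6%N -> forall q, q != p -> outside_Q P p q.
Proof.
rewrite /dominance; set A := [set q | _] => hA q hq.
have sub : A \subset [set~ p] by apply/subsetP => x; rewrite !inE => /andP [].
have c6 : #|[set~ p]| = 6%N by rewrite cardsC1 card_ord.
have /eqP eA : A == [set~ p] by rewrite eqEcard sub c6 hA.
have : q \in A by rewrite eA !inE.
by rewrite inE => /andP [_ /asboolP].
Qed.

Lemma dom0 (P : 'I_7 -> vec) (p : 'I_7) : dominance P p = 0%N -> forall q, q != p -> ~ outside_Q P p q.
Proof.
rewrite /dominance; set A := [set q | _] => hA q hq ho.
have /eqP A0 : A == set0 by rewrite -cards_eq0 hA.
have : q \in A by rewrite inE hq; apply/asboolP.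
by rewrite A0 inE.
Qed.
End S2.

Theorem lemma3p2 (R : realType) (P : 'I_7 -> 'rV[R]_3) :
  typical P -> heptagonal P ->
  (forall p1 p2 : 'I_7, dominance P p1 = 6%N -> dominance P p2 = 6%N -> p1 = p2) /\
  (forall p1 p2 : 'I_7, dominance P p1 = 0%N -> dominance P p2 = 0%N -> p1 = p2).
Proof.
move=> htyp [a [hl hcv]].
split => p1 p2 h1 h2; case: (eqVneq p1 p2) => // hne; exfalso;
  have [q [hq [hq' [n1 n2]]]] := keyc htyp hl hcv hne.
- by apply: n1; split; [apply: dom6 h1 q hq | apply: dom6 h2 q hq'].
- by apply: n2; split; [apply: dom0 h1 q hq | apply: dom0 h2 q hq'].
Qed.
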